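(* Let $(X,d,\mu)$, $Y$, $\Omega$, $\mathrm M_\Omega$ be as in the setting below, let $f:Y\to\mathbb R^{M_1}$ be $L_1$-bi-Lipschitz, and let $g:X\to\mathbb R^{M_1}$ be a $\sqrt{M_1}L_1$-Lipschitz map with $g|_Y=f$. Assume $M_1$ is sufficiently large relative to $C_1$, $A$ and $\delta$ (i.e. $M_1\ge M_0(C_1,A,\delta)$ for a suitable $M_0$). Let $Q,R\in\mathrm M_\Omega$ with $d_{\mathrm W}(Q,R)\ge16M_1L_1^2$, and let $p\in Q$, $q\in R$. Then: (1) if $\dfrac{\operatorname{dist}(Q,R)}{\max(\operatorname{diam}Q,\operatorname{diam}R)}\ge\dfrac{8M_1L_1^2}{1+4C_1A/\delta}$, then $|g(p)-g(q)|\ge c\,d(p,q)$; (2) if $\dfrac{\operatorname{dist}(Q,R)}{\max(\operatorname{diam}Q,\operatorname{diam}R)}\le\dfrac{8M_1L_1^2}{1+4C_1A/\delta}$, then $|\operatorname{dist}(p,Y)-\operatorname{dist}(q,Y)|\ge c\,d(p,q)$, where $c>0$ depends only on $L_1,M_1,C_1,A,\delta$.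
   Context: Setting: $(X,d)$ is an $A$-uniformly perfect complete metric space (for every $x$ and $0<r<\operatorname{diam}X$ there is $y$ with $A^{-1}r\le d(x,y)\le r$) with a doubling measure $\mu$ (balls have finite positive measure and $\mu(B(x,2r))\le D\mu(B(x,r))$); $Y\subset X$ is closed, $\Omega=X\setminus Y$. Christ cubes of $(\Omega,d,\mu|_\Omega)$ come with constants $\delta,a_0\in(0,1)$, $C_1<\infty$. A Christ–Whitney decomposition of $\Omega$ is a collection $\mathrm M_\Omega$ of such Christ cubes satisfying: (1) $\mu(\Omega\setminus\bigcup_{Q\in\mathrm M_\Omega}Q)=0$; (2) $\operatorname{diam}(Q)\le \operatorname{dist}(Q,Y)\le \frac{4C_1A}{\delta}\operatorname{diam}(Q)$ for each $Q\in\mathrm M_\Omega$; (3) distinct $Q,Q'\in\mathrm M_\Omega$ are disjoint; (4) for each $Q\in\mathrm M_\Omega$ there are $x\in\Omega$ and $k\in\mathbb Z$ with $B(x,a_0\delta^k)\subset Q\subset B(x,C_1\delta^k)$. Whitney distance: $d_{\mathrm W}(Q,R)=\dfrac{\operatorname{dist}(Q,R)}{\min(\operatorname{diam}Q,\operatorname{diam}R)}$. *)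

(* Defs.v *)
From Stdlib Require Import Reals Lra Lia ZArith Classical ClassicalEpsilon.
Open Scope R_scope.

(* ---------- suprema / infima of real sets (0 when undefined) ---------- *)
Definition Rsup (E : R -> Prop) : R :=
  match excluded_middle_informative (bound E /\ exists x, E x) with
  | left H => proj1_sig (completeness E (proj1 H) (proj2 H))
  | right _ => 0
  end.
Definition Rinf (E : R -> Prop) : R := - Rsup (fun x => E (- x)).

Definition is_metric {X : Type} (d : X -> X -> R) : Prop :=
  (forall x y, 0 <= d x y) /\
  (forall x y, d x y = 0 <-> x = y) /\
  (forall x y, d x y = d y x) /\
  (forall x y z, d x z <= d x y + d y z).

Definition complete_metric {X : Type} (d : X -> X -> R) : Prop :=
  is_metric d /\
  forall u : nat -> X,
    (forall eps, 0 < eps -> exists N, forall m n, (N <= m)%nat -> (N <= n)%nat ->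
        d (u m) (u n) < eps) ->
    exists x, forall eps, 0 < eps -> exists N, forall n, (N <= n)%nat -> d (u n) x < eps.

Definition ballX {X : Type} (d : X -> X -> R) (x : X) (r : R) : X -> Prop :=
  fun y => d x y < r.

Definition subsetS {X : Type} (S T : X -> Prop) : Prop := forall x, S x -> T x.

Definition closed_in {X : Type} (d : X -> X -> R) (Y : X -> Prop) : Prop :=
  forall x, (forall eps, 0 < eps -> exists y, Y y /\ d x y < eps) -> Y x.

Definition diamS {X : Type} (d : X -> X -> R) (S : X -> Prop) : R :=
  Rsup (fun r => exists x y, S x /\ S y /\ r = d x y).

Definition dist_set {X : Type} (d : X -> X -> R) (S T : X -> Prop) : R :=
  Rinf (fun r => exists x y, S x /\ T y /\ r = d x y).

Definition dist_pt {X : Type} (d : X -> X -> R) (p : X) (T : X -> Prop) : R :=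
  dist_set d (fun z => z = p) T.

Definition dW {X : Type} (d : X -> X -> R) (Q Rc : X -> Prop) : R :=
  dist_set d Q Rc / Rmin (diamS d Q) (diamS d Rc).

(* A-uniformly perfect: for every x and 0 < r < diamS X there is y with
   A^{-1} r <= d(x,y) <= r.  ("r < diamS X" is written as "some pair of
   points is at distance > r", which also covers diamS X = +infinity.) *)
Definition uniformly_perfect {X : Type} (d : X -> X -> R) (A : R) : Prop :=
  forall x r, 0 < r -> (exists a b, r < d a b) ->
    exists y, r / A <= d x y /\ d x y <= r.

Inductive ereal : Type := EFin (r : R) | EInf.

Definition ele (a b : ereal) : Prop :=
  match a, b with
  | _, EInf => True
  | EInf, EFin _ => False
  | EFin x, EFin y => x <= y
  end.

Definition set_empty {X : Type} : X -> Prop := fun _ => False.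

(* Countable subadditivity
   mu(U_n A_n) <= sum_n mu(A_n) is written as: every real bound of the
   partial sums bounds mu(U_n A_n) (trivial if the series diverges). *)
Fixpoint sumR (n : nat) (a : nat -> R) : R :=
  match n with O => 0 | S k => sumR k a + a k end.

Definition outer_measure {X : Type} (mu : (X -> Prop) -> ereal) : Prop :=
  mu set_empty = EFin 0 /\
  (forall S T, subsetS S T -> ele (mu S) (mu T)) /\
  (forall (An : nat -> X -> Prop) (a : nat -> R) (r : R),
     (forall i, mu (An i) = EFin (a i)) ->
     (forall n, sumR n a <= r) ->
     ele (mu (fun x => exists i, An i x)) (EFin r)).

Definition doubling_measure {X : Type} (d : X -> X -> R)
    (mu : (X -> Prop) -> ereal) (D : R) : Prop :=
  outer_measure mu /\
  (forall x r, 0 < r -> exists v, mu (ballX d x r) = EFin v /\ 0 < v) /\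
  (forall x r v w, 0 < r -> mu (ballX d x r) = EFin v ->
      mu (ballX d x (2 * r)) = EFin w -> w <= D * v).

(* Dc k Q : Q is a dyadic (Christ) cube of generation k in Omega.
   These are Christ's properties (M. Christ, Colloq. Math. 1990, Thm 11),
   with the metric space Omega (balls of Omega are balls of X intersected
   with Omega) and the measure mu restricted to Omega. *)
Definition ballO {X : Type} (d : X -> X -> R) (Om : X -> Prop) (x : X) (r : R)
  : X -> Prop := fun y => Om y /\ d x y < r.

Definition christ_system {X : Type} (d : X -> X -> R) (mu : (X -> Prop) -> ereal)
    (Om : X -> Prop) (delta a0 C1 : R) (Dc : Z -> (X -> Prop) -> Prop) : Prop :=
  0 < delta < 1 /\ 0 < a0 < 1 /\ 0 < C1 /\
  (forall k Q, Dc k Q -> subsetS Q Om /\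
      forall x, Q x -> exists r, 0 < r /\ subsetS (ballO d Om x r) Q) /\
  (forall k, mu (fun x => Om x /\ ~ exists Q, Dc k Q /\ Q x) = EFin 0) /\
  (forall k l Q Q', (k <= l)%Z -> Dc l Q -> Dc k Q' ->
      subsetS Q Q' \/ (forall x, Q x -> Q' x -> False)) /\
  (forall k l Q, (l < k)%Z -> Dc k Q ->
      exists Q', Dc l Q' /\ subsetS Q Q' /\
        forall Q'', Dc l Q'' -> subsetS Q Q'' -> Q'' = Q') /\
  (forall k Q, Dc k Q -> diamS d Q <= C1 * powerRZ delta k) /\
  (forall k Q, Dc k Q -> exists z, Om z /\ subsetS (ballO d Om z (a0 * powerRZ delta k)) Q) /\
  (exists eta C2, 0 < eta /\ 0 < C2 /\
     forall k Q t v, Dc k Q -> 0 < t -> mu Q = EFin v ->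
       ele (mu (fun x => Q x /\
                 forall eps, 0 < eps -> exists w, Om w /\ ~ Q w /\
                                          d x w < t * powerRZ delta k + eps))
           (EFin (C2 * Rpower t eta * v))).

Definition christ_whitney {X : Type} (d : X -> X -> R) (mu : (X -> Prop) -> ereal)
    (Y : X -> Prop) (delta a0 C1 A : R) (Dc : Z -> (X -> Prop) -> Prop)
    (M : (X -> Prop) -> Prop) : Prop :=
  let Om := fun x => ~ Y x in
  (forall Q, M Q -> exists k, Dc k Q) /\
  mu (fun x => Om x /\ ~ exists Q, M Q /\ Q x) = EFin 0 /\
  (forall Q, M Q -> diamS d Q <= dist_set d Q Y /\
       dist_set d Q Y <= (4 * C1 * A / delta) * diamS d Q) /\
  (forall Q Q', M Q -> M Q' -> Q <> Q' -> forall x, Q x -> Q' x -> False) /\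
  (forall Q, M Q -> exists x k, Om x /\
       subsetS (ballO d Om x (a0 * powerRZ delta k)) Q /\
       subsetS Q (ballO d Om x (C1 * powerRZ delta k))).

(* ---------- maps into R^M (vectors = nat -> R, first M coordinates) ---------- *)
Definition eucl (M : nat) (v w : nat -> R) : R :=
  sqrt (sumR M (fun i => (v i - w i) ^ 2)).

Definition bilipschitz_on {X : Type} (d : X -> X -> R) (M : nat) (L : R)
    (Y : X -> Prop) (f : X -> nat -> R) : Prop :=
  forall y z, Y y -> Y z ->
    d y z / L <= eucl M (f y) (f z) /\ eucl M (f y) (f z) <= L * d y z.

Definition lipschitz {X : Type} (d : X -> X -> R) (M : nat) (L : R)
    (g : X -> nat -> R) : Prop :=
  forall x y, eucl M (g x) (g y) <= L * d x y.

(* Main.v *)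
Require Import Defs.
From Stdlib Require Import Reals Lra Lia ZArith Classical ClassicalEpsilon.
Open Scope R_scope.

Lemma Rsup_ub (E : R -> Prop) x : bound E -> E x -> x <= Rsup E.
Proof.
  intros Hb Hx. unfold Rsup.
  destruct (excluded_middle_informative _) as [H|H].
  - destruct (completeness E (proj1 H) (proj2 H)) as [m [Hm1 Hm2]]; simpl. now apply Hm1.
  - exfalso; apply H; split; [exact Hb| exists x; exact Hx].
Qed.

Lemma Rsup_lub (E : R -> Prop) b : (exists x, E x) -> (forall x, E x -> x <= b) -> Rsup E <= b.
Proof.
  intros Hn Hb. unfold Rsup.
  destruct (excluded_middle_informative _) as [H|H].
  - destruct (completeness E (proj1 H) (proj2 H)) as [m [Hm1 Hm2]]; simpl. now apply Hm2.
  - exfalso; apply H; split; [exists b; exact Hb| exact Hn].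
Qed.

Lemma Rsup_approx (E : R -> Prop) eps : bound E -> (exists x, E x) -> 0 < eps ->
  exists x, E x /\ Rsup E - eps < x.
Proof.
  intros Hb Hn He. apply NNPP; intro Hc.
  assert (Rsup E <= Rsup E - eps); [|lra].
  apply Rsup_lub; auto. intros x Hx.
  apply Rnot_lt_le. intro Hl. apply Hc. exists x; auto.
Qed.

Lemma Rsup_empty (E : R -> Prop) : (forall x, ~ E x) -> Rsup E = 0.
Proof.
  intros H. unfold Rsup.
  destruct (excluded_middle_informative _) as [H'|H']; [|reflexivity].
  exfalso. destruct H' as [_ [x Hx]]. exact (H x Hx).
Qed.

Lemma Rinf_lb (E : R -> Prop) x : (forall x, E x -> 0 <= x) -> E x -> Rinf E <= x.
Proof.
  intros Hp Hx. unfold Rinf.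
  assert (- x <= Rsup (fun z => E (- z))); [|lra].
  apply Rsup_ub.
  - exists 0. intros z Hz. specialize (Hp _ Hz). lra.
  - rewrite Ropp_involutive. exact Hx.
Qed.

Lemma Rinf_glb (E : R -> Prop) b : (exists x, E x) -> (forall x, E x -> b <= x) -> b <= Rinf E.
Proof.
  intros [x Hx] Hb. unfold Rinf.
  assert (Rsup (fun z => E (- z)) <= - b); [|lra].
  apply Rsup_lub.
  - exists (- x). rewrite Ropp_involutive. exact Hx.
  - intros z Hz. specialize (Hb _ Hz). lra.
Qed.

Lemma Rinf_approx (E : R -> Prop) eps : (forall x, E x -> 0 <= x) -> (exists x, E x) -> 0 < eps ->
  exists x, E x /\ x < Rinf E + eps.
Proof.
  intros Hp [x Hx] He. unfold Rinf.
  destruct (Rsup_approx (fun z => E (- z)) eps) as [z [Hz1 Hz2]]; auto.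
  - exists 0. intros z Hz. specialize (Hp _ Hz). lra.
  - exists (- x). rewrite Ropp_involutive. exact Hx.
  - exists (- z). split; auto. lra.
Qed.

Section D.
Context {X : Type} (d : X -> X -> R) (dpos : forall x y, 0 <= d x y).

Lemma dist_lb S T x y : S x -> T y -> dist_set d S T <= d x y.
Proof.
  intros. unfold dist_set. apply Rinf_lb.
  - intros z (a & b & _ & _ & ->). apply dpos.
  - exists x, y; auto.
Qed.

Lemma dist_glb S T b : (exists x y, S x /\ T y) -> (forall x y, S x -> T y -> b <= d x y) ->
  b <= dist_set d S T.
Proof.
  intros (x & y & Hx & Hy) Hb. unfold dist_set. apply Rinf_glb.
  - exists (d x y), x, y; auto.
  - intros z (a & c & Ha & Hc & ->). auto.
Qed.

Lemma dist_approx S T eps : (exists x y, S x /\ T y) -> 0 < eps ->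
  exists x y, S x /\ T y /\ d x y < dist_set d S T + eps.
Proof.
  intros (x & y & Hx & Hy) He. unfold dist_set.
  destruct (Rinf_approx (fun r => exists x y, S x /\ T y /\ r = d x y) eps) as [z [(a & b & Ha & Hb & ->) Hz]]; auto.
  - intros z (a & c & _ & _ & ->). apply dpos.
  - exists (d x y), x, y; auto.
  - exists a, b; auto.
Qed.

Lemma dist_empty S T : (forall y, ~ T y) -> dist_set d S T = 0.
Proof.
  intros H. unfold dist_set, Rinf. rewrite Rsup_empty; [lra|].
  intros z (a & b & _ & Hb & _). exact (H b Hb).
Qed.

Lemma diam_ub S B : (forall x y, S x -> S y -> d x y <= B) ->
  forall x y, S x -> S y -> d x y <= diamS d S.
Proof.
  intros HB x y Hx Hy. unfold diamS. apply Rsup_ub.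
  - exists B. intros z (a & b & Ha & Hb & ->). auto.
  - exists x, y; auto.
Qed.
End D.

Lemma sumR_ext n a b : (forall i, (i < n)%nat -> a i = b i) -> sumR n a = sumR n b.
Proof.
  induction n; simpl; intros H; auto.
  rewrite IHn by (intros; apply H; lia). rewrite (H n) by lia. reflexivity.
Qed.


Lemma sumR_sq_nonneg n a : 0 <= sumR n (fun i => a i ^ 2).
Proof. induction n; cbn [sumR]; [lra|]. pose proof (pow2_ge_0 (a n)). lra. Qed.

Lemma mink2 u v x y : sqrt ((u+v)^2 + (x+y)^2) <= sqrt (u^2+x^2) + sqrt (v^2+y^2).
Proof.
  set (P := sqrt (u^2+x^2)). set (Q := sqrt (v^2+y^2)).
  assert (HP : 0 <= P) by apply sqrt_pos. assert (HQ : 0 <= Q) by apply sqrt_pos.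
  assert (HP2 : P * P = u^2+x^2) by (apply sqrt_sqrt; nra).
  assert (HQ2 : Q * Q = v^2+y^2) by (apply sqrt_sqrt; nra).
  assert (H1 : u*v + x*y <= P*Q).
  { assert ((u*v+x*y)^2 <= (P*Q)^2) by (replace ((P*Q)^2) with ((P*P)*(Q*Q)) by ring; rewrite HP2, HQ2; pose proof (pow2_ge_0 (u*y - v*x)); nra).
    assert (0 <= P*Q) by nra. nra. }
  rewrite <- (sqrt_square (P+Q)) by lra.
  apply sqrt_le_1_alt. nra.
Qed.

Lemma minkowski n a b : sqrt (sumR n (fun i => (a i + b i)^2)) <=
  sqrt (sumR n (fun i => a i ^2)) + sqrt (sumR n (fun i => b i ^2)).
Proof.
  induction n; cbn [sumR].
  - rewrite sqrt_0. lra.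
  - set (A := sumR n (fun i => a i ^2)) in *. set (B := sumR n (fun i => b i ^2)) in *.
    set (C := sumR n (fun i => (a i + b i)^2)) in *.
    assert (HA : 0 <= A) by apply sumR_sq_nonneg.
    assert (HB : 0 <= B) by apply sumR_sq_nonneg.
    assert (HC : 0 <= C) by (apply (sumR_sq_nonneg n (fun i => a i + b i))).
    pose proof (mink2 (sqrt A) (sqrt B) (a n) (b n)) as H2.
    rewrite !pow2_sqrt in H2 by auto.
    eapply Rle_trans; [|exact H2].
    apply sqrt_le_1_alt.
    assert (C <= (sqrt A + sqrt B)^2).
    { rewrite <- (pow2_sqrt C) by auto. pose proof (sqrt_pos C).
      apply pow_incr; lra. }
    lra.
Qed.

Lemma eucl_tri M u v w : eucl M u w <= eucl M u v + eucl M v w.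
Proof.
  unfold eucl.
  rewrite (sumR_ext M (fun i => (u i - w i)^2) (fun i => ((u i - v i) + (v i - w i))^2))
    by (intros; f_equal; ring).
  apply (minkowski M (fun i => u i - v i) (fun i => v i - w i)).
Qed.

Lemma eucl_sym M u v : eucl M u v = eucl M v u.
Proof. unfold eucl. f_equal. apply sumR_ext. intros. ring. Qed.
Lemma le_eps a b : (forall eps, 0 < eps -> a <= b + eps) -> a <= b.
Proof.
  intros H. destruct (Rle_lt_dec a b) as [|Hlt]; auto.
  specialize (H ((a - b)/2) ltac:(lra)). lra.
Qed.

Lemma Rabs_ge_neg x : - x <= Rabs x.
Proof. unfold Rabs; destruct (Rcase_abs x); lra. Qed.

Theorem lemma3p4 :
  forall (C1 A delta : R), 0 < delta < 1 -> 0 < C1 -> 0 < A ->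
  exists M0 : nat, forall M1 : nat, (M0 <= M1)%nat ->
  forall L1 : R, 1 <= L1 ->
  exists c : R, 0 < c /\
  forall (X : Type) (d : X -> X -> R) (mu : (X -> Prop) -> ereal) (D a0 : R)
    (Y : X -> Prop) (Dc : Z -> (X -> Prop) -> Prop) (MW : (X -> Prop) -> Prop)
    (f g : X -> nat -> R) (Q Rc : X -> Prop) (p q : X),
    complete_metric d ->
    uniformly_perfect d A ->
    doubling_measure d mu D ->
    closed_in d Y ->
    christ_system d mu (fun x => ~ Y x) delta a0 C1 Dc ->
    christ_whitney d mu Y delta a0 C1 A Dc MW ->
    bilipschitz_on d M1 L1 Y f ->
    lipschitz d M1 (sqrt (INR M1) * L1) g ->
    (forall y, Y y -> forall i, (i < M1)%nat -> g y i = f y i) ->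
    MW Q -> MW Rc ->
    16 * INR M1 * L1 ^ 2 <= dW d Q Rc ->
    Q p -> Rc q ->
    (dist_set d Q Rc / Rmax (diamS d Q) (diamS d Rc)
       >= 8 * INR M1 * L1 ^ 2 / (1 + 4 * C1 * A / delta) ->
     eucl M1 (g p) (g q) >= c * d p q) /\
    (dist_set d Q Rc / Rmax (diamS d Q) (diamS d Rc)
       <= 8 * INR M1 * L1 ^ 2 / (1 + 4 * C1 * A / delta) ->
     Rabs (dist_pt d p Y - dist_pt d q Y) >= c * d p q).
Proof.
  intros C1 A delta Hdl HC1 HA.
  assert (Hlam : 0 <= 4 * C1 * A / delta).
  { unfold Rdiv. apply Rmult_le_pos; [|left; apply Rinv_0_lt_compat; lra].
    apply Rmult_le_pos; lra. }
  set (lam := 4 * C1 * A / delta) in *.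
  set (s := 1 + lam).
  assert (Hs : 1 <= s) by (unfold s; lra).
  destruct (archimed (s^4)) as [Hup _].
  exists (S (Z.to_nat (up (s^4)))).
  intros M1 HM1 L1 HL.
  assert (Hs4 : 1 <= s^4) by (pose proof (pow_R1_Rle s 4 Hs); lra).
  assert (Hm : s^4 <= INR M1).
  { apply le_INR in HM1. rewrite S_INR in HM1.
    assert (Hz : (0 <= up (s^4))%Z) by (apply le_IZR; lra).
    rewrite INR_IZR_INZ, Z2Nat.id in HM1 by exact Hz. lra. }
  set (m := INR M1) in *.
  assert (Hm1 : 1 <= m) by lra.
  set (r := sqrt m).
  assert (Hr2 : r * r = m) by (apply sqrt_sqrt; lra).
  assert (Hrs : s^2 <= r).
  { unfold r. rewrite <- (sqrt_pow2 (s^2)) by (apply pow_le; lra).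
    apply sqrt_le_1_alt. replace ((s^2)^2) with (s^4) by ring. lra. }
  assert (Hs2 : 1 <= s^2) by (pose proof (pow_R1_Rle s 2 Hs); lra).
  assert (Hr1 : 1 <= r) by lra.
  set (K := 8 * m * L1 ^ 2 / s).
  assert (HL2 : 1 <= L1^2) by (pose proof (pow_R1_Rle L1 2 HL); lra).
  assert (HKs : K * s = 8 * m * L1^2) by (unfold K; field; lra).
  assert (HK : 0 < K).
  { unfold K. unfold Rdiv. apply Rmult_lt_0_compat; [nra|apply Rinv_0_lt_compat; lra]. }
  exists (Rmin (1/(2*L1)) (1/(2*(2+K)))).
  split.
  { apply Rmin_glb_lt; apply Rdiv_lt_0_compat; lra. }
  intros X d mu D a0 Y Dc MW f g Q Rc p q Hcm Hupf Hdm Hcl Hcs Hcw Hbl Hlip Hgf HQ HR HdW Hp Hq.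
  destruct Hcm as [[dpos [dzero [dsym dtri]]] _].
  assert (d0 : forall x, d x x = 0) by (intros; apply dzero; reflexivity).
  hnf in Hcw. destruct Hcw as (_ & _ & Hwh & _ & Hball).
  assert (Hdiam : forall S, MW S -> forall x y, S x -> S y -> d x y <= diamS d S).
  { intros S HS. destruct (Hball S HS) as (z & k & _ & _ & Hsub).
    apply (diam_ub d S (2 * (C1 * powerRZ delta k))).
    intros x y Hx Hy. destruct (Hsub x Hx) as [_ H1]. destruct (Hsub y Hy) as [_ H2].
    pose proof (dtri x z y). rewrite (dsym x z) in *. lra. }
  assert (Hdiam0 : forall S x, MW S -> S x -> 0 <= diamS d S).
  { intros S x HS Hx. rewrite <- (d0 x). apply Hdiam; auto. }
  assert (Yne : forall S, MW S -> 0 < diamS d S -> exists y, Y y).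
  { intros S HS Hpos. apply NNPP. intro Hn.
    destruct (Hwh S HS) as [H1 _]. rewrite dist_empty in H1; [lra|].
    intros y Hy. apply Hn. exists y; auto. }
  assert (HdistUp : forall S x, MW S -> S x -> (exists y, Y y) -> dist_pt d x Y <= s * diamS d S).
  { intros S x HS Hx Hy. destruct (Hwh S HS) as [_ H2].
    assert (dist_pt d x Y - diamS d S <= dist_set d S Y); [|fold lam in H2; unfold s; lra].
    apply dist_glb; auto.
    - destruct Hy as [y Hy]. exists x, y; auto.
    - intros z y Hz Hy'. unfold dist_pt.
      pose proof (dist_lb d dpos (fun z => z = x) Y x y eq_refl Hy').
      pose proof (dtri x z y). pose proof (Hdiam S HS x z Hx Hz). lra. }
  assert (HdistLo : forall S x, MW S -> S x -> diamS d S <= dist_pt d x Y).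
  { intros S x HS Hx. destruct (Hwh S HS) as [H1 _].
    destruct (classic (exists y, Y y)) as [Hy|Hy].
    - eapply Rle_trans; [exact H1|]. unfold dist_pt. apply dist_glb; auto.
      + destruct Hy as [y Hy]. exists x, y; auto.
      + intros z y -> Hy'. apply dist_lb; auto.
    - rewrite dist_empty in H1; [|intros y Hy'; apply Hy; exists y; auto].
      unfold dist_pt. rewrite dist_empty; [lra|]. intros y Hy'; apply Hy; exists y; auto. }
  assert (Happrox : forall x eps, (exists y, Y y) -> 0 < eps ->
            exists y, Y y /\ d x y < dist_pt d x Y + eps).
  { intros x eps [y Hy] He. unfold dist_pt.
    destruct (dist_approx d dpos (fun z => z = x) Y eps) as (z & y' & -> & Hy' & Hlt); auto.
    exists x, y; auto. exists y'; auto. }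
  set (dQ := diamS d Q) in *. set (dR := diamS d Rc) in *. set (DD := dist_set d Q Rc) in *.
  assert (HdQ : 0 <= dQ) by (apply (Hdiam0 Q p); auto).
  assert (HdR : 0 <= dR) by (apply (Hdiam0 Rc q); auto).
  assert (HDD : DD <= d p q) by (apply dist_lb; auto).
  assert (HDD0 : 0 <= DD).
  { apply dist_glb; auto. exists p, q; auto. }
  assert (Hpq : d p q <= dQ + DD + dR).
  { apply le_eps. intros eps He.
    destruct (dist_approx d dpos Q Rc eps) as (x & y & Hx & Hy & Hlt); auto.
    exists p, q; auto.
    pose proof (dtri p x q). pose proof (dtri x y q).
    assert (d p x <= dQ) by (apply (Hdiam Q HQ); auto). assert (d y q <= dR) by (apply (Hdiam Rc HR); auto). change (dist_set d Q Rc) with DD in Hlt. lra. }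
  assert (Hc1 : Rmin (1/(2*L1)) (1/(2*(2+K))) <= 1/(2*L1)) by apply Rmin_l.
  assert (Hc2 : Rmin (1/(2*L1)) (1/(2*(2+K))) <= 1/(2*(2+K))) by apply Rmin_r.
  set (c := Rmin (1/(2*L1)) (1/(2*(2+K)))) in *.
  assert (Hdpq0 : 0 <= d p q) by apply dpos.
  split.
  -
    intros Hrat. fold lam s K in Hrat. apply Rle_ge.
    set (h := Rmax dQ dR) in *.
    assert (HhQ : dQ <= h) by apply Rmax_l. assert (HhR : dR <= h) by apply Rmax_r.
    assert (Hh : 0 < h).
    { destruct (Req_dec h 0) as [H0|H0]; [|lra].
      exfalso. rewrite H0 in Hrat. unfold Rdiv in Hrat. rewrite Rinv_0 in Hrat. lra. }
    assert (HDh : K * h <= DD).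
    { apply Rge_le in Hrat. apply (Rmult_le_compat_r h) in Hrat; [|lra].
      unfold Rdiv in Hrat. rewrite Rmult_assoc, Rinv_l in Hrat by lra. lra. }
    assert (Hyne : exists y, Y y).
    { unfold h in Hh.
      destruct (Rle_lt_dec dQ 0) as [H0|H0].
      - apply (Yne Rc HR). change (0 < dR). unfold Rmax in Hh. destruct (Rle_dec dQ dR); lra.
      - apply (Yne Q HQ). exact H0. }
    assert (HpY : dist_pt d p Y <= s * h).
    { pose proof (HdistUp Q p HQ Hp Hyne) as HH. change (dist_pt d p Y <= s * dQ) in HH. nra. }
    assert (HqY : dist_pt d q Y <= s * h).
    { pose proof (HdistUp Rc q HR Hq Hyne) as HH. change (dist_pt d q Y <= s * dR) in HH. nra. }
    assert (H8 : 8 * m * L1^2 * h <= s * DD).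
    { rewrite <- HKs. nra. }
    assert (Hmain : d p q / (2 * L1) <= eucl M1 (g p) (g q)).
    { apply le_eps. intros eps He.
      set (e' := eps / (4 * r * L1)).
      assert (He' : 0 < e') by (unfold e'; apply Rdiv_lt_0_compat; nra).
      assert (He'r : 4 * r * L1 * e' = eps) by (unfold e'; field; lra).
      destruct (Happrox p e' Hyne He') as (yp & Hyp & Hdp).
      destruct (Happrox q e' Hyne He') as (yq & Hyq & Hdq).
      set (e := d p yp + d q yq).
      assert (He1 : e <= 2 * s * h + 2 * e') by (unfold e; lra).
      assert (He0 : 0 <= e) by (unfold e; pose proof (dpos p yp); pose proof (dpos q yq); lra).
      assert (He2 : 8 * m * L1^2 * e <= 2 * s^2 * DD + 16 * m * L1^2 * e').
      { assert (8 * m * L1^2 * e <= 8 * m * L1^2 * (2 * s * h + 2 * e')).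
        { apply Rmult_le_compat_l; [nra|lra]. }
        assert (2 * s * (8 * m * L1 ^ 2 * h) <= 2 * s * (s * DD)).
        { apply Rmult_le_compat_l; [lra|exact H8]. }
        nra. }
      assert (He3 : 8 * m * L1^2 * e <= 2 * r * d p q + 16 * m * L1^2 * e').
      { assert (s^2 * DD <= r * d p q).
        { apply Rmult_le_compat; auto; lra. }
        lra. }
      assert (He4 : 4 * r * L1^2 * e <= d p q + 8 * r * L1^2 * e').
      { rewrite <- Hr2 in He3.
        assert (2 * r * (4 * r * L1 ^ 2 * e) <= 2 * r * (d p q + 8 * r * L1 ^ 2 * e')) by nra.
        apply Rmult_le_reg_l in H; lra. }
      assert (Hgf2 : eucl M1 (g yp) (g yq) = eucl M1 (f yp) (f yq)).
      { unfold eucl. f_equal. apply sumR_ext. intros i Hi. rewrite !Hgf; auto. }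
      destruct (Hbl yp yq Hyp Hyq) as [Hb1 _].
      assert (HLE : d yp yq <= L1 * eucl M1 (g yp) (g yq)).
      { rewrite Hgf2. apply (Rmult_le_compat_l L1) in Hb1; [|lra].
        unfold Rdiv in Hb1. replace (L1 * (d yp yq * / L1)) with (d yp yq) in Hb1 by (field; lra).
        exact Hb1. }
      pose proof (eucl_tri M1 (g yp) (g p) (g yq)) as T1.
      pose proof (eucl_tri M1 (g p) (g q) (g yq)) as T2.
      rewrite (eucl_sym M1 (g yp) (g p)) in T1.
      pose proof (Hlip p yp) as L1p. pose proof (Hlip q yq) as L1q.
      fold m r in L1p, L1q.
      set (E := eucl M1 (g p) (g q)) in *.
      assert (HEyy : eucl M1 (g yp) (g yq) <= E + r * L1 * e) by (unfold e; nra).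
      assert (Htri : d p q <= e + d yp yq).
      { unfold e. pose proof (dtri p yp q). pose proof (dtri yp yq q). rewrite (dsym q yq) in *. lra. }
      assert (HLE2 : d p q - e <= L1 * E + r * L1^2 * e).
      { assert (L1 * eucl M1 (g yp) (g yq) <= L1 * (E + r * L1 * e)) by (apply Rmult_le_compat_l; lra).
        lra. }
      assert (Hre : e + r * L1^2 * e <= 2 * r * L1^2 * e).
      { assert (1 <= r * L1^2) by nra. nra. }
      assert (Hfin : d p q / 2 - 4 * r * L1^2 * e' <= L1 * E) by lra.
      assert (Hfin2 : d p q / (2 * L1) - eps <= E).
      { apply (Rmult_le_reg_l L1); [lra|].
        replace (L1 * (d p q / (2 * L1) - eps)) with (d p q / 2 - L1 * eps) by (field; lra).
        rewrite <- He'r. nra. }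
      lra. }
    assert (c * d p q <= d p q / (2 * L1)).
    { unfold Rdiv. rewrite Rmult_comm. apply Rmult_le_compat_l; auto.
      unfold Rdiv in Hc1. lra. }
    lra.
  -
    intros Hrat. fold lam s K in Hrat. apply Rle_ge.
    assert (HdW' : 16 * m * L1 ^ 2 <= DD / Rmin dQ dR) by exact HdW.
    assert (H16 : 0 < 16 * m * L1^2) by nra.
    assert (Hc3 : c * d p q <= d p q / (2 * (2 + K))).
    { unfold Rdiv. rewrite Rmult_comm. apply Rmult_le_compat_l; auto.
      unfold Rdiv in Hc2. lra. }
    assert (Hkey : forall a b, 0 < a -> a <= b -> 16 * m * L1^2 <= DD / a -> DD / b <= K ->
               2 * s * a <= b /\ DD <= K * b /\ 0 < b).
    { intros a b Ha Hab H1 H2.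
      assert (Hb : 0 < b) by lra.
      assert (H1' : 16 * m * L1^2 * a <= DD).
      { apply (Rmult_le_compat_r a) in H1; [|lra].
        replace (DD / a * a) with DD in H1 by (field; lra). lra. }
      assert (H2' : DD <= K * b).
      { apply (Rmult_le_compat_r b) in H2; [|lra].
        replace (DD / b * b) with DD in H2 by (field; lra). lra. }
      split; [|split; auto].
      assert (16 * m * L1^2 * a * s <= K * b * s) by (apply Rmult_le_compat_r; lra).
      assert (8 * m * L1^2 * (2 * s * a) <= 8 * m * L1^2 * b).
      { replace (8 * m * L1^2 * b) with (K * s * b) by (rewrite HKs; ring). nra. }
      apply Rmult_le_reg_l in H0; [exact H0|nra]. }
    assert (Hpos : forall a b, 0 <= a -> 0 <= b -> 16 * m * L1^2 <= DD / Rmin a b -> 0 < Rmin a b).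
    { intros a b Ha0 Hb0 H. destruct (Rle_lt_dec (Rmin a b) 0) as [H0|H0]; auto.
      exfalso. assert (Rmin a b = 0 \/ Rmin a b < 0) as [E|E] by lra.
      - rewrite E in H. unfold Rdiv in H. rewrite Rinv_0 in H. lra.
      - unfold Rmin in E. destruct (Rle_dec a b); lra. }
    pose proof (Hpos dQ dR HdQ HdR HdW') as Hmin.
    destruct (Rle_dec dQ dR) as [Hle|Hle].
    + rewrite Rmin_left in HdW', Hmin by lra. rewrite Rmax_right in Hrat by lra.
      destruct (Hkey dQ dR Hmin Hle HdW' Hrat) as (K1 & K2 & K3).
      assert (Hyne : exists y, Y y) by (apply (Yne Q HQ); change (0 < dQ); lra).
      pose proof (HdistUp Q p HQ Hp Hyne) as HH1. pose proof (HdistLo Rc q HR Hq) as HH2.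
      change (dist_pt d p Y <= s * dQ) in HH1. change (dR <= dist_pt d q Y) in HH2.
      pose proof (Rabs_ge_neg (dist_pt d p Y - dist_pt d q Y)).
      assert (d p q <= (2 + K) * dR) by nra.
      assert (d p q / (2 * (2 + K)) <= dR / 2).
      { apply (Rmult_le_reg_l (2 * (2 + K))); [lra|].
        replace (2 * (2 + K) * (d p q / (2 * (2 + K)))) with (d p q) by (field; lra). nra. }
      nra.
    + rewrite Rmin_right in HdW', Hmin by lra. rewrite Rmax_left in Hrat by lra.
      destruct (Hkey dR dQ Hmin ltac:(lra) HdW' Hrat) as (K1 & K2 & K3).
      assert (Hyne : exists y, Y y) by (apply (Yne Rc HR); change (0 < dR); lra).
      pose proof (HdistUp Rc q HR Hq Hyne) as HH1. pose proof (HdistLo Q p HQ Hp) as HH2.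
      change (dist_pt d q Y <= s * dR) in HH1. change (dQ <= dist_pt d p Y) in HH2.
      pose proof (Rle_abs (dist_pt d p Y - dist_pt d q Y)).
      assert (d p q <= (2 + K) * dQ) by nra.
      assert (d p q / (2 * (2 + K)) <= dQ / 2).
      { apply (Rmult_le_reg_l (2 * (2 + K))); [lra|].
        replace (2 * (2 + K) * (d p q / (2 * (2 + K)))) with (d p q) by (field; lra). nra. }
      nra.
Qed.
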